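(* Let $\mathds J=[0,\infty)$, $n\ge2$, $1\le k\le n-1$, and consider \[ \begin{bmatrix}\dot x_1(t)\\ \dot x_2(t)\end{bmatrix}=\begin{bmatrix}B_{11}(t) & B_{12}(t)\\ 0 & B_{22}(t)\end{bmatrix}\begin{bmatrix}x_1(t)\\ x_2(t)\end{bmatrix}, \] where $B_{11}(t)$, $B_{12}(t)$, $B_{22}(t)$ are continuous, uniformly bounded matrix functions on $\mathds J$ of dimensions $(n-k)\times(n-k)$, $(n-k)\times k$, $k\times k$. Assume that $\dot x_1(t)=B_{11}(t)x_1(t)$ has an exponential dichotomy on $\mathds J$ with projection $P_1=0$, and $\dot x_2(t)=B_{22}(t)x_2(t)$ has an exponential dichotomy on $\mathds J$ with projection $P_2=I_k$. Then the full system $\dot x(t)=B(t)x(t)$ has an exponential dichotomy on $\mathds J$ with projection $P=\begin{bmatrix}0&0\\0&I_k\end{bmatrix}$. Moreover, it is reducible to block diagonal form with dimension $k$ in such a way that the resulting block diagonal coefficient matrix $D(t)=\mathrm{diag}(D_1(t),D_2(t))$ ($D_2(t)$ of size $k\times k$) satisfies $D_1(t)=B_{11}(t)$.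
   Context: Exponential dichotomy of $\dot x=A(t)x$ on $\mathds J$ with projection $P$ ($P^2=P$): there exist $K\ge1$, $\alpha>0$ and a nonsingular fundamental matrix solution $X(t)$ of $\dot X=AX$ with $\|X(t)PX^{-1}(t_0)\|\le Ke^{-\alpha(t-t_0)}$ for $t\ge t_0\ge0$ and $\|X(t)(I-P)X^{-1}(t_0)\|\le Ke^{\alpha(t-t_0)}$ for $0\le t\le t_0$. A Lyapunov transformation is a smooth invertible change of coordinates $x(t)=S(t)z(t)$ with $S(t)$, $S^{-1}(t)$ and $\dot S(t)$ uniformly bounded on $\mathds J$; it transforms $\dot x=A(t)x$ into $\dot z=[S^{-1}(t)A(t)S(t)-S^{-1}(t)\dot S(t)]z$. The system $\dot x=A(t)x$ is reducible to block diagonal form with dimension $k$ if there is a Lyapunov transformation $x=S(t)z$ transforming it into $\dot z=D(t)z$ with $D(t)=\begin{bmatrix}D_1(t)&0\\0&D_2(t)\end{bmatrix}$, $D_2(t)$ a $k\times k$ matrix. *)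

(* Defs.v *)
From HB Require Import structures.
From mathcomp Require Import all_boot all_order all_algebra.
From mathcomp Require Import all_classical all_reals all_analysis.
Set Implicit Arguments. Unset Strict Implicit. Unset Printing Implicit Defensive.
Import Order.TTheory GRing.Theory Num.Theory.
Import numFieldNormedType.Exports.
Local Open Scope classical_set_scope.
Local Open Scope ring_scope.

Definition Jhalf (R : realType) : set R := `[0, +oo[.
Arguments Jhalf R : clear implicits.

Definition fundamental_on_J (R : realType) (n : nat)
  (A X : R -> 'M[R]_n) : Prop :=
  {within Jhalf R, continuous X} /\
  (forall t : R, 0 < t -> is_derive t 1 X (A t *m X t)) /\
  (forall t : R, 0 <= t -> X t \in unitmx).

Definition exp_dichotomy (R : realType) (n : nat)
  (A : R -> 'M[R]_n) (P : 'M[R]_n) : Prop :=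
  P *m P = P /\
  exists (K alpha : R) (X : R -> 'M[R]_n),
    1 <= K /\ 0 < alpha /\ fundamental_on_J A X /\
    (forall t t0 : R, 0 <= t0 -> t0 <= t ->
       `|X t *m P *m invmx (X t0)| <= K * expR (- alpha * (t - t0))) /\
    (forall t t0 : R, 0 <= t -> t <= t0 ->
       `|X t *m (1%:M - P) *m invmx (X t0)| <= K * expR (alpha * (t - t0))).

Definition lyapunov_transf (R : realType) (n : nat)
  (S dS : R -> 'M[R]_n) : Prop :=
  {within Jhalf R, continuous S} /\
  {within Jhalf R, continuous dS} /\
  (forall t : R, 0 < t -> is_derive t 1 S (dS t)) /\
  (forall t : R, 0 <= t -> S t \in unitmx) /\
  exists M : R, forall t : R, 0 <= t ->
    `|S t| <= M /\ `|invmx (S t)| <= M /\ `|dS t| <= M.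

(* The matrix function transformed by x = S z:
   S^{-1} A S - S^{-1} S'. *)
Definition transformed_coef (R : realType) (n : nat)
  (A S dS : R -> 'M[R]_n) (t : R) : 'M[R]_n :=
  invmx (S t) *m A t *m S t - invmx (S t) *m dS t.

Definition unif_bounded_on_J (R : realType) (p q : nat)
  (F : R -> 'M[R]_(p, q)) : Prop :=
  exists M : R, forall t : R, 0 <= t -> `|F t| <= M.

(* Main.v *)
Require Import Defs.
From HB Require Import structures.
From mathcomp Require Import all_boot all_order all_algebra.
From mathcomp Require Import all_classical all_reals all_analysis.
From mathcomp Require Import ring lra.
Set Implicit Arguments. Unset Strict Implicit. Unset Printing Implicit Defensive.
Import Order.TTheory GRing.Theory Num.Theory.
Import numFieldNormedType.Exports.
Local Open Scope classical_set_scope.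
Local Open Scope ring_scope.


Section MxNorm.
Context {R : realType}.

Lemma mx_entry_le m n (A : 'M[R]_(m, n)) i j : `|A i j| <= `|A|.
Proof.
rewrite [leRHS]/Num.Def.normr /= mx_normrE.
by apply: le_trans (le_bigmax _ _ (i, j)) => /=.
Qed.

Lemma mx_norm_le m n (A : 'M[R]_(m, n)) (c : R) :
  0 <= c -> (forall i j, `|A i j| <= c) -> `|A| <= c.
Proof.
move=> c0 H; rewrite [leLHS]/Num.Def.normr /= mx_normrE.
by apply: bigmax_le => // -[i j] _; exact: H.
Qed.

Lemma norm_mulmx m n p (A : 'M[R]_(m, n)) (B : 'M[R]_(n, p)) :
  `|A *m B| <= n%:R * `|A| * `|B|.
Proof.
apply: mx_norm_le; first by rewrite !mulr_ge0.
move=> i j; rewrite mxE.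
apply: le_trans (ler_norm_sum _ _ _) _.
apply: le_trans (_ : \sum_(l < n) (`|A| * `|B|) <= _).
  apply: ler_sum => l _; rewrite normrM.
  by apply: ler_pM => //; exact: mx_entry_le.
by rewrite sumr_const card_ord -mulrA mulr_natl.
Qed.

Lemma norm_block m1 m2 n1 n2 (a : 'M[R]_(m1, n1)) (b : 'M[R]_(m1, n2))
  (c : 'M[R]_(m2, n1)) (d : 'M[R]_(m2, n2)) :
  `|block_mx a b c d| <= `|a| + `|b| + `|c| + `|d|.
Proof.
apply: mx_norm_le; first by rewrite !addr_ge0.
move=> i j; rewrite block_mxEh mxE.
case: splitP => i' _; rewrite mxE; case: splitP => j' _; rewrite ?mxE.
all: apply: le_trans (mx_entry_le _ _ _) _.
all: have := normr_ge0 a; have := normr_ge0 b; have := normr_ge0 c; have := normr_ge0 d; lra.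
Qed.

Lemma norm_scalar1 n : `|(1%:M : 'M[R]_n)| <= 1.
Proof.
apply: mx_norm_le => // i j; rewrite mxE.
by case: (i == j); rewrite ?normr1 ?normr0.
Qed.

End MxNorm.


Section Cvg.
Context {R : realType} {T : Type} (F : set_system T) {FF : Filter F}.

Lemma cvg_mxP m n (f : T -> 'M[R]_(m, n)) (A : 'M[R]_(m, n)) :
  f @ F --> A <-> forall i j, (fun x => f x i j) @ F --> A i j.
Proof.
split=> [/cvgrPdist_le H i j|H].
- apply/cvgrPdist_le => e e0; apply: filterS (H e e0) => x hx.
  apply: le_trans hx; have := mx_entry_le (A - f x) i j; by rewrite !mxE.
- apply/cvgrPdist_le => e e0.
  have : \forall x \near F, forall ij : 'I_m * 'I_n,
      `|A ij.1 ij.2 - f x ij.1 ij.2| <= e.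
    apply: filter_forall => ij; exact: (cvgrPdist_le _ _).1 (H ij.1 ij.2) e e0.
  apply: filterS => x hx; apply: mx_norm_le (ltW e0) _ => i j.
  by rewrite !mxE; exact: (hx (i, j)).
Qed.

Lemma cvg_sumR (I : Type) (r : seq I) (f : I -> T -> R) (a : I -> R) :
  (forall i, f i @ F --> a i) ->
  (fun x => \sum_(i <- r) f i x) @ F --> \sum_(i <- r) a i.
Proof.
move=> H; elim: r => [|i r IH].
  rewrite big_nil; under eq_fun do rewrite big_nil; exact: cvg_cst.
rewrite big_cons; under eq_fun do rewrite big_cons.
exact: cvgD.
Qed.

Lemma cvg_prodR (I : Type) (r : seq I) (f : I -> T -> R) (a : I -> R) :
  (forall i, f i @ F --> a i) ->
  (fun x => \prod_(i <- r) f i x) @ F --> \prod_(i <- r) a i.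
Proof.
move=> H; elim: r => [|i r IH].
  rewrite big_nil; under eq_fun do rewrite big_nil; exact: cvg_cst.
rewrite big_cons; under eq_fun do rewrite big_cons.
exact: cvgM.
Qed.

Lemma cvg_mulmx m n p (f : T -> 'M[R]_(m, n)) (g : T -> 'M[R]_(n, p)) (A : 'M[R]_(m, n)) (B : 'M[R]_(n, p)) :
  f @ F --> A -> g @ F --> B -> (fun x => f x *m g x) @ F --> A *m B.
Proof.
move=> /cvg_mxP Hf /cvg_mxP Hg; apply/cvg_mxP => i j.
rewrite mxE; under eq_fun do rewrite mxE.
by apply: cvg_sumR => l; apply: cvgM.
Qed.

Lemma cvg_det n (f : T -> 'M[R]_n) (A : 'M[R]_n) :
  f @ F --> A -> (fun x => \det (f x)) @ F --> \det A.
Proof.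
move=> /cvg_mxP H; rewrite /determinant.
apply: cvg_sumR => s; apply: cvgM; first exact: cvg_cst.
by apply: cvg_prodR => i; exact: H.
Qed.

Lemma cvg_invmx n (f : T -> 'M[R]_n) (A : 'M[R]_n) :
  A \in unitmx -> f @ F --> A -> (fun x => invmx (f x)) @ F --> invmx A.
Proof.
move=> uA fA.
have dA : \det A != 0 by rewrite -unitfE -unitmxE.
have fu : \forall x \near F, f x \in unitmx.
  near=> x; rewrite unitmxE unitfE; near: x.
  exact: cvgr_neq0 _ (cvg_det fA) dA.
have E : {near F, (fun x => (\det (f x))^-1 *: \adj (f x)) =1 (fun x => invmx (f x))}.
  by apply: filterS fu => x hx; rewrite /invmx hx.
apply: cvg_trans (near_eq_cvg E) _.
rewrite /invmx uA; apply/cvg_mxP => i j.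
rewrite mxE; under eq_fun do rewrite mxE.
apply: cvgM; first exact: cvgV dA (cvg_det fA).
rewrite /adjugate; rewrite !mxE; under eq_fun do rewrite !mxE.
rewrite /cofactor; apply: cvgM; first exact: cvg_cst.
apply: cvg_det; apply/cvg_mxP => a b; rewrite !mxE; under eq_fun do rewrite !mxE.
by move/cvg_mxP: fA; apply.
Unshelve. all: by end_near. Qed.

Lemma cvg_block m1 m2 n1 n2 (a : T -> 'M[R]_(m1, n1)) (b : T -> 'M[R]_(m1, n2))
  (c : T -> 'M[R]_(m2, n1)) (d : T -> 'M[R]_(m2, n2))
  (a0 : 'M[R]_(m1, n1)) (b0 : 'M[R]_(m1, n2)) (c0 : 'M[R]_(m2, n1)) (d0 : 'M[R]_(m2, n2)) :
  a @ F --> a0 -> b @ F --> b0 -> c @ F --> c0 -> d @ F --> d0 ->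
  (fun x => block_mx (a x) (b x) (c x) (d x)) @ F --> block_mx a0 b0 c0 d0.
Proof.
move=> /cvg_mxP ha /cvg_mxP hb /cvg_mxP hc /cvg_mxP hd; apply/cvg_mxP => i j.
rewrite block_mxEh mxE; under eq_fun do rewrite block_mxEh mxE.
case: splitP => i' _; rewrite mxE; under eq_fun do rewrite mxE;
  case: splitP => j' _; rewrite ?mxE; under eq_fun do rewrite ?mxE.
all: first [exact: ha | exact: hb | exact: hc | exact: hd].
Qed.

End Cvg.


Section Der.
Context {R : realType}.

Lemma is_derive_cvgP m n (f : R -> 'M[R]_(m, n)) (t : R) (l : 'M[R]_(m, n)) :
  is_derive t 1 f l <->
  (fun h => h^-1 *: ((f \o shift t) (h *: 1) - f t)) @ 0^' --> l.
Proof.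
split.
- by move=> [d <-]; exact: d.
- move=> H; apply: DeriveDef; first by apply/cvg_ex; exists l.
  exact: cvg_lim H.
Qed.

Lemma is_derive_cvgRP (f : R -> R) (t : R) (l : R) :
  is_derive t 1 f l <->
  (fun h => h^-1 *: ((f \o shift t) (h *: 1) - f t)) @ 0^' --> l.
Proof.
split.
- by move=> [d <-]; exact: d.
- move=> H; apply: DeriveDef; first by apply/cvg_ex; exists l.
  exact: cvg_lim H.
Qed.

Lemma is_derive_mxP m n (f : R -> 'M[R]_(m, n)) (t : R) (D : 'M[R]_(m, n)) :
  is_derive t 1 f D <-> forall i j, is_derive t 1 (fun x => f x i j) (D i j).
Proof.
rewrite is_derive_cvgP cvg_mxP; split => H i j; move: (H i j).
- rewrite is_derive_cvgRP => {}H; apply: cvg_trans _ H.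
  by apply: near_eq_cvg; near=> h; rewrite !mxE.
- rewrite is_derive_cvgRP => {}H; apply: cvg_trans _ H.
  by apply: near_eq_cvg; near=> h; rewrite !mxE.
Unshelve. all: by end_near. Qed.

Lemma is_derive_cont m n (f : R -> 'M[R]_(m, n)) (t : R) (D : 'M[R]_(m, n)) :
  is_derive t 1 f D -> f @ t --> f t.
Proof.
move=> [d _]; apply: differentiable_continuous.
exact/derivable1_diffP.
Qed.

Lemma is_derive_mulmx m n p (f : R -> 'M[R]_(m, n)) (g : R -> 'M[R]_(n, p)) (t : R)
  (df : 'M[R]_(m, n)) (dg : 'M[R]_(n, p)) :
  is_derive t 1 f df -> is_derive t 1 g dg ->
  is_derive t 1 (fun x => f x *m g x) (df *m g t + f t *m dg).
Proof.
move=> /is_derive_mxP Hf /is_derive_mxP Hg; apply/is_derive_mxP => i j.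
have -> : (fun x => (f x *m g x) i j) =
    \sum_(l < n) ((fun x => f x i l) * (fun x => g x l j)).
  by apply/funext => x; rewrite mxE fct_sumE.
apply: is_derive_eq.
rewrite !mxE -big_split /=; apply: eq_bigr => l _.
by rewrite /GRing.scale /= addrC mulrC [X in _ + X]mulrC.
Qed.

Lemma is_derive_cst_mx m n (A : 'M[R]_(m, n)) (t : R) : is_derive t 1 (fun _ => A) 0.
Proof. exact: is_derive_cst. Qed.

End Der.


Section Der2.
Context {R : realType}.

Lemma shift_cvg (t : R) : (fun h : R => h *: (1:R) + t) @ 0^' --> t.
Proof.
apply/cvgrPdist_le => e e0; near=> h.
rewrite opprD addrCA subrr addr0 normrN normrZ normr1 mulr1.
by near: h; exact: dnbhs0_le.
Unshelve. all: by end_near. Qed.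

Lemma is_derive_invmx n (f : R -> 'M[R]_n) (t : R) (df : 'M[R]_n) :
  f t \in unitmx -> is_derive t 1 f df ->
  is_derive t 1 (fun x => invmx (f x)) (- (invmx (f t) *m df *m invmx (f t))).
Proof.
move=> u d.
have c := is_derive_cont d.
have fc : (fun h : R => f (h *: 1 + t)) @ 0^' --> f t.
  have := cvg_comp _ _ (@shift_cvg t) c. exact.
have gc : (fun h : R => invmx (f (h *: 1 + t))) @ 0^' --> invmx (f t).
  exact: cvg_invmx u fc.
have dq := (is_derive_cvgP f t df).1 d.
have dA : \det (f t) != 0 by rewrite -unitfE -unitmxE.
have fu : \forall h \near 0^', f (h *: 1 + t) \in unitmx.
  near=> h; rewrite unitmxE unitfE; near: h.
  exact: cvgr_neq0 _ (cvg_det fc) dA.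
apply/is_derive_cvgP.
have E : {near 0^', (fun h : R => - (invmx (f (h *: 1 + t)) *m
     (h^-1 *: ((f \o shift t) (h *: 1) - f t)) *m invmx (f t))) =1
   (fun h => h^-1 *: (((fun x => invmx (f x)) \o shift t) (h *: 1) - invmx (f t)))}.
  apply: filterS fu => h hu /=.
  rewrite -scalemxAr -scalemxAl mulmxBr mulmxBl mulVmx // mul1mx.
  rewrite -mulmxA mulmxV // mulmx1 -scalerN opprB.
  by rewrite /shift /=.
apply: cvg_trans (near_eq_cvg E) _.
apply: cvgN; apply: cvg_mulmx; last exact: cvg_cst.
apply: cvg_mulmx; first exact: gc.
exact: dq.
Unshelve. all: by end_near. Qed.

Lemma is_derive_block m1 m2 n1 n2 (a : R -> 'M[R]_(m1, n1)) (b : R -> 'M[R]_(m1, n2))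
  (c : R -> 'M[R]_(m2, n1)) (d : R -> 'M[R]_(m2, n2)) (t : R)
  (a0 : 'M[R]_(m1, n1)) (b0 : 'M[R]_(m1, n2)) (c0 : 'M[R]_(m2, n1)) (d0 : 'M[R]_(m2, n2)) :
  is_derive t 1 a a0 -> is_derive t 1 b b0 -> is_derive t 1 c c0 -> is_derive t 1 d d0 ->
  is_derive t 1 (fun x => block_mx (a x) (b x) (c x) (d x)) (block_mx a0 b0 c0 d0).
Proof.
move=> /is_derive_mxP ha /is_derive_mxP hb /is_derive_mxP hc /is_derive_mxP hd.
apply/is_derive_mxP => i j.
rewrite block_mxEh mxE; under eq_fun do rewrite block_mxEh mxE.
case: splitP => i' _; rewrite mxE; under eq_fun do rewrite mxE;
  case: splitP => j' _; rewrite ?mxE; under eq_fun do rewrite ?mxE.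
all: first [exact: ha | exact: hb | exact: hc | exact: hd].
Qed.

End Der2.


Section ContJ.
Context {R : realType}.
Local Notation J := (Jhalf R).

Lemma JE (x : R) : J x = (0 <= x).
Proof. by rewrite /Jhalf /= in_itv /= andbT. Qed.

Lemma cJP {U : topologicalType} (f : R -> U) :
  {within J, continuous f} <->
  (forall x : R, 0 <= x -> f @ within J (nbhs x) --> f x).
Proof.
rewrite subspace_continuousP; split => H x.
- by move=> x0; apply: H; rewrite JE.
- by rewrite JE => x0; apply: H.
Qed.

Lemma cJ_mul m n p (f : R -> 'M[R]_(m, n)) (g : R -> 'M[R]_(n, p)) :
  {within J, continuous f} -> {within J, continuous g} ->
  {within J, continuous (fun x => f x *m g x)}.
Proof.
move=> /cJP hf /cJP hg; apply/cJP => x x0.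
exact: cvg_mulmx (hf x x0) (hg x x0).
Qed.

Lemma cJ_add m n (f g : R -> 'M[R]_(m, n)) :
  {within J, continuous f} -> {within J, continuous g} ->
  {within J, continuous (fun x => f x + g x)}.
Proof.
move=> /cJP hf /cJP hg; apply/cJP => x x0.
exact: cvgD (hf x x0) (hg x x0).
Qed.

Lemma cJ_opp m n (f : R -> 'M[R]_(m, n)) :
  {within J, continuous f} -> {within J, continuous (fun x => - f x)}.
Proof.
move=> /cJP hf; apply/cJP => x x0.
exact: cvgN (hf x x0).
Qed.

Lemma cJ_cst {U : topologicalType} (a : U) : {within J, continuous (fun _ : R => a)}.
Proof. by apply/cJP => x x0; exact: cvg_cst. Qed.

Lemma cJ_inv n (f : R -> 'M[R]_n) :
  (forall x, 0 <= x -> f x \in unitmx) ->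
  {within J, continuous f} -> {within J, continuous (fun x => invmx (f x))}.
Proof.
move=> u /cJP hf; apply/cJP => x x0.
exact: cvg_invmx (u x x0) (hf x x0).
Qed.

Lemma cJ_block m1 m2 n1 n2 (a : R -> 'M[R]_(m1, n1)) (b : R -> 'M[R]_(m1, n2))
  (c : R -> 'M[R]_(m2, n1)) (d : R -> 'M[R]_(m2, n2)) :
  {within J, continuous a} -> {within J, continuous b} ->
  {within J, continuous c} -> {within J, continuous d} ->
  {within J, continuous (fun x => block_mx (a x) (b x) (c x) (d x))}.
Proof.
move=> /cJP ha /cJP hb /cJP hc /cJP hd; apply/cJP => x x0.
exact: cvg_block (ha x x0) (hb x x0) (hc x x0) (hd x x0).
Qed.

Lemma cJ_der {V : normedModType R} (f : R -> V) :
  (forall x, 0 <= x -> derivable f x 1) -> {within J, continuous f}.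
Proof.
move=> H; rewrite continuous_subspace_in => x; rewrite inE JE => x0.
apply: continuous_subspaceT_for; first by rewrite JE.
apply: differentiable_continuous; exact/derivable1_diffP/H.
Qed.

Lemma le_max_ge0 (x : R) : 0 <= Num.max x 0.
Proof. by rewrite le_max lexx orbT. Qed.

Lemma cJ_ext {U : topologicalType} (f : R -> U) :
  {within J, continuous f} -> continuous (fun x : R => f (Num.max x 0)).
Proof.
move=> /cJP hf x.
have cm : (fun y : R => Num.max y 0) @ x --> Num.max x 0.
  apply: (@continuous_max R R (fun y : R => y) (cst 0) x); [exact: cvg_id | exact: cvg_cst].
have cmJ : (fun y : R => Num.max y 0) @ x --> within J (nbhs (Num.max x 0)).
  move=> P HP.
  apply: (@filterS _ (nbhs x) _ (fun y => J (Num.max y 0) -> P (Num.max y 0))).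
    by move=> y Hy; apply: Hy; rewrite JE le_max lexx orbT.
  exact: (cm _ HP).
have := cvg_comp _ _ cmJ (hf _ (le_max_ge0 x)).
exact.
Qed.

End ContJ.


Section FTC.
Context {R : realType}.
Local Notation J := (Jhalf R).
Local Notation mu := (@lebesgue_measure R).

Lemma antideriv (f : R -> R) : {within J, continuous f} ->
  exists Phi : R -> R, forall x : R, 0 <= x -> is_derive x 1 Phi (f x).
Proof.
move=> /cJ_ext gc; set g := fun x => f (Num.max x 0) in gc.
exists (fun x => (\int[mu]_(t in [set` `[(-1:R), x]]) (g t))%R) => x x0.
have intg : mu.-integrable `[(-1:R), x + 1] (EFin \o g).
  apply: continuous_compact_integrable; first exact: segment_compact.
  exact: continuous_subspaceT.
have [] := @continuous_FTC1_closed R g (-1) x (x + 1) _ intg _ (gc x).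
- by rewrite ltrDl.
- by apply: lt_le_trans x0; rewrite ltrN10.
move=> d e; apply: DeriveDef => //.
rewrite -derive1E e /g; congr f; exact: max_l.
Qed.

Lemma antideriv_mx m n (F : R -> 'M[R]_(m, n)) : {within J, continuous F} ->
  exists Phi : R -> 'M[R]_(m, n), forall x : R, 0 <= x -> is_derive x 1 Phi (F x).
Proof.
move=> /cJP hF.
have H : forall ij : 'I_m * 'I_n, exists Phi : R -> R,
    forall x : R, 0 <= x -> is_derive x 1 Phi (F x ij.1 ij.2).
  move=> ij; apply: antideriv; apply/cJP => x x0.
  by move/cvg_mxP: (hF x x0); apply.
exists (fun x => \matrix_(i, j) (projT1 (cid (H (i, j)))) x) => x x0.
apply/is_derive_mxP => i j.
have -> : (fun x => (\matrix_(i, j) (projT1 (cid (H (i, j)))) x) i j) =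
   projT1 (cid (H (i, j))).
  by apply/funext => y; rewrite mxE.
exact: (projT2 (cid (H (i, j))) x x0).
Qed.

End FTC.


Section MVTexp.
Context {R : realType}.

Lemma is_derive_expa (a be x : R) :
  is_derive x 1 (fun y => expR (- be * (y - a))) (expR (- be * (x - a)) * (- be)).
Proof.
have hg : is_derive x 1 (fun y : R => - be * (y - a)) (- be).
  have := is_deriveZ (- be) (is_deriveB (is_derive_id x (1:R)) (is_derive_cst a x 1)).
  by rewrite subr0 /GRing.scale /= mulr1.
exact: (is_derive1_comp (f := expR) (g := fun y : R => - be * (y - a))).
Qed.

Lemma mvt_exp (f df : R -> R) (a b C be : R) : a <= b -> 0 < be -> 0 <= C ->
  (forall x, a <= x -> x <= b -> is_derive x 1 f (df x)) ->
  (forall x, a <= x -> x <= b -> `|df x| <= C * expR (- be * (x - a))) ->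
  `|f b - f a| <= C / be.
Proof.
move=> ab be0 C0 hd hb.
set e := fun y : R => expR (- be * (y - a)).
have ea : e a = 1 by rewrite /e subrr mulr0 expR0.
have eb : 0 <= e b by rewrite /e expR_ge0.
have he : forall x : R, is_derive x 1 e (e x * (- be)) by move=> x; exact: is_derive_expa.
have Hu : forall x : R, a <= x -> x <= b ->
    is_derive x 1 (f + (C / be) *: e) (df x + (C / be) *: (e x * (- be))).
  by move=> x ax xb; exact: is_deriveD (hd x ax xb) (is_deriveZ _ (he x)).
have Hv : forall x : R, a <= x -> x <= b ->
    is_derive x 1 (f - (C / be) *: e) (df x - (C / be) *: (e x * (- be))).
  by move=> x ax xb; exact: is_deriveB (hd x ax xb) (is_deriveZ _ (he x)).
have key : forall x : R, a <= x -> x <= b -> (C / be) *: (e x * (- be)) = - (C * e x).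
  move=> x _ _; rewrite /GRing.scale /=; field.
  by rewrite gt_eqF.
have itv : forall x : R, x \in `]a, b[%R -> a <= x /\ x <= b.
  by move=> x; rewrite in_itv /= => /andP[/ltW ? /ltW ?].
have U : (f + (C / be) *: e) b <= (f + (C / be) *: e) a.
  apply: (@ler0_derive1_nincr _ _ a b) => //.
  - by move=> x /itv [ax xb]; case: (Hu x ax xb).
  - move=> x /itv [ax xb]; rewrite derive1E (@derive_val _ _ _ _ _ _ _ (Hu x ax xb)).
    rewrite key // subr_le0; apply: le_trans (ler_norm _) _; exact: hb.
  - apply: derivable_within_continuous => x; rewrite in_itv /= => /andP[ax xb].
    by case: (Hu x ax xb).
have V : (f - (C / be) *: e) a <= (f - (C / be) *: e) b.
  apply: (@ger0_derive1_ndecr _ _ a b) => //.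
  - by move=> x /itv [ax xb]; case: (Hv x ax xb).
  - move=> x /itv [ax xb]; rewrite derive1E (@derive_val _ _ _ _ _ _ _ (Hv x ax xb)).
    rewrite key // opprK; have := hb x ax xb; rewrite ler_norml => /andP[h1 _].
    rewrite /e; lra.
  - apply: derivable_within_continuous => x; rewrite in_itv /= => /andP[ax xb].
    by case: (Hv x ax xb).
have U' : f b + C / be * e b <= f a + C / be * e a := U.
have V' : f a - C / be * e a <= f b - C / be * e b := V.
rewrite ea mulr1 in U' V'.
have Cb : 0 <= C / be by rewrite divr_ge0 // ltW.
have : 0 <= C / be * e b by rewrite mulr_ge0.
move: U' V'; set p := C / be * e b; set q := C / be => U' V' hp.
rewrite ler_norml; apply/andP; split; lra.
Qed.

End MVTexp.


Section Misc.
Context {R : realType}.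

Lemma inv_unique n (A B : 'M[R]_n) : A *m B = 1%:M -> invmx A = B.
Proof.
move=> AB; have [uA _] := mulmx1_unit AB.
by rewrite -[invmx A]mulmx1 -AB mulmxA mulVmx // mul1mx.
Qed.

Lemma invmx_mul n (A B : 'M[R]_n) : A \in unitmx -> B \in unitmx ->
  invmx (A *m B) = invmx B *m invmx A.
Proof.
move=> uA uB; apply: inv_unique.
by rewrite mulmxA -(mulmxA A) mulmxV // mulmx1 mulmxV.
Qed.

Lemma invmx_diag m k (A : 'M[R]_m) (B : 'M[R]_k) : A \in unitmx -> B \in unitmx ->
  invmx (block_mx A 0 0 B) = block_mx (invmx A) 0 0 (invmx B).
Proof.
move=> uA uB; apply: inv_unique.
rewrite mulmx_block !mulmx0 !mul0mx !addr0 !add0r !mulmxV //.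
by rewrite -scalar_mx_block.
Qed.

Lemma unitmx_diag m k (A : 'M[R]_m) (B : 'M[R]_k) : A \in unitmx -> B \in unitmx ->
  block_mx A 0 0 B \in unitmx.
Proof.
move=> uA uB; rewrite unitmxE det_ublock unitrM -!unitmxE uA uB //.
Qed.

Lemma norm_mulmx_le m n p (A : 'M[R]_(m, n)) (B : 'M[R]_(n, p)) a b :
  `|A| <= a -> `|B| <= b -> `|A *m B| <= n%:R * a * b.
Proof.
move=> hA hB; apply: le_trans (norm_mulmx A B) _.
rewrite -!mulrA; apply: ler_wpM2l => //.
by apply: ler_pM => //.
Qed.

Lemma mvt_exp_mx p q (f df : R -> 'M[R]_(p, q)) (a b C be : R) :
  a <= b -> 0 < be -> 0 <= C ->
  (forall x, a <= x -> x <= b -> is_derive x 1 f (df x)) ->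
  (forall x, a <= x -> x <= b -> `|df x| <= C * expR (- be * (x - a))) ->
  `|f b - f a| <= C / be.
Proof.
move=> ab be0 C0 hd hb; apply: mx_norm_le; first by rewrite divr_ge0 // ltW.
move=> i j; rewrite !mxE.
apply: (@mvt_exp _ (fun x => f x i j) (fun x => df x i j)) => // x ax xb.
- by move/is_derive_mxP: (hd x ax xb); apply.
- by apply: le_trans (mx_entry_le _ i j) (hb x ax xb).
Qed.

Lemma exp_small (c eps al : R) : 0 <= c -> 0 < eps -> 0 < al ->
  exists T0, 0 <= T0 /\ c * expR (- al * T0) < eps.
Proof.
move=> c0 e0 a0.
set d := Num.min (eps / (c + 1)) 1.
have d0 : 0 < d by rewrite lt_min ltr01 andbT divr_gt0 // ltr_wpDl.
have [y ey] := expR_total d0.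
have y0 : y <= 0 by rewrite -expR_le1 ey ge_min lexx orbT.
exists (- y / al); split; first by rewrite divr_ge0 // ?oppr_ge0 // ltW.
have -> : - al * (- y / al) = y by field; rewrite gt_eqF.
rewrite ey.
have : d <= eps / (c + 1) by rewrite ge_min lexx.
rewrite ler_pdivlMr ?ltr_wpDl // => h.
nra.
Qed.

End Misc.


Lemma exists_H (R : realType) m k (B11 : R -> 'M[R]_m) (B12 : R -> 'M[R]_(m,k))
  (B22 : R -> 'M[R]_k) (X1 : R -> 'M[R]_m) (X2 : R -> 'M[R]_k) (K a M12 : R) :
  0 < a -> 0 <= K ->
  {within Jhalf R, continuous B12} -> (forall t : R, 0 <= t -> `|B12 t| <= M12) ->
  {within Jhalf R, continuous X1} ->
  (forall t : R, 0 < t -> is_derive t 1 X1 (B11 t *m X1 t)) ->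
  (forall t : R, 0 <= t -> X1 t \in unitmx) ->
  {within Jhalf R, continuous X2} ->
  (forall t : R, 0 < t -> is_derive t 1 X2 (B22 t *m X2 t)) ->
  (forall t : R, 0 <= t -> X2 t \in unitmx) ->
  (forall t s : R, 0 <= t -> t <= s -> `|X1 t *m invmx (X1 s)| <= K * expR (- a * (s - t))) ->
  (forall t s : R, 0 <= s -> s <= t -> `|X2 t *m invmx (X2 s)| <= K * expR (- a * (t - s))) ->
  exists H : R -> 'M[R]_(m, k), {within Jhalf R, continuous H} /\
    (forall t : R, 0 < t -> is_derive t 1 H (B11 t *m H t + B12 t - H t *m B22 t)) /\
    exists MH, forall t : R, 0 <= t -> `|H t| <= MH.
Proof.
move=> a0 K0 cB12 hM12 cX1 dX1 uX1 cX2 dX2 uX2 hE1 hE2.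
have M120 : 0 <= M12 by apply: le_trans (hM12 0 (lexx 0)).
pose Fm t := invmx (X1 t) *m B12 t *m X2 t.
have cFm : {within Jhalf R, continuous Fm}.
  apply: cJ_mul cX2; apply: cJ_mul cB12; exact: cJ_inv uX1 cX1.
have [Phi dPhi] := antideriv_mx cFm.
have cPhi : {within Jhalf R, continuous Phi}.
  apply: cJ_der => x x0; have [d _] := dPhi x x0; exact: d.
set c1 := `|invmx (X1 0)|; set c2 := `|X2 0|.
set C0 := k%:R * (k%:R * (m%:R * (m%:R * c1 * K) * M12) * K) * c2.
have C00 : 0 <= C0 by rewrite /C0 /c1 /c2 !mulr_ge0 // ?ler0n.
have hF : forall s : R, 0 <= s -> `|Fm s| <= C0 * expR (- a * s).
  move=> s s0.
  have -> : Fm s = invmx (X1 0) *m (X1 0 *m invmx (X1 s)) *m B12 s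
      *m (X2 s *m invmx (X2 0)) *m X2 0.
    rewrite /Fm !mulmxA mulVmx ?uX1 // mul1mx -!mulmxA mulVmx ?uX2 // mulmx1.
    by rewrite !mulmxA.
  have h1 := hE1 0 s (lexx 0) s0; have h2 := hE2 s 0 (lexx 0) s0.
  rewrite !subr0 in h1 h2.
  apply: le_trans (norm_mulmx_le (norm_mulmx_le (norm_mulmx_le
    (norm_mulmx_le (lexx c1) h1) (hM12 s s0)) h2) (lexx c2)) _.
  have e0 := expR_ge0 (- a * s); have e1 : expR (- a * s) <= 1.
    by rewrite expR_le1; nra.
  move: e0 e1; set e := expR _ => e0 e1.
  have -> : k%:R * (k%:R * (m%:R * (m%:R * c1 * (K * e)) * M12) * (K * e)) * c2
      = C0 * e * e by rewrite /C0; ring.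
  by rewrite -[leRHS]mulr1; apply: ler_wpM2l => //; exact: mulr_ge0.
have tail : forall T0 T : R, 0 <= T0 -> T0 <= T ->
    `|Phi T - Phi T0| <= C0 * expR (- a * T0) / a.
  move=> T0 T T00 T0T.
  apply: (mvt_exp_mx (df := Fm)) => //.
  - by rewrite mulr_ge0 ?expR_ge0.
  - by move=> x hx _; apply: dPhi; apply: le_trans hx.
  - move=> x hx _; apply: le_trans (hF x (le_trans T00 hx)) _.
    have -> : expR (- a * x) = expR (- a * T0) * expR (- a * (x - T0)).
      by rewrite -expRD; congr expR; ring.
    by rewrite mulrA.
have cvgPhi : cvg (Phi @ +oo).
  apply/cauchy_cvgP; apply/cauchyP => eps e0.
  have [T0 [T00 hT0]] := exp_small (divr_ge0 C00 (ltW a0)) e0 a0.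
  exists (Phi T0); exists T0; split; first exact: num_real.
  move=> T /ltW hT; rewrite -ball_normE /ball_ /= distrC.
  apply: le_lt_trans (tail T0 T T00 hT) _.
  by rewrite mulrAC.
set L := lim (Phi @ +oo).
have PhiL : Phi @ +oo --> L := cvgPhi.
exists (fun t => X1 t *m (Phi t - L) *m invmx (X2 t)).
split.
  apply: cJ_mul; last exact: cJ_inv uX2 cX2.
  apply: cJ_mul cX1 _; apply: cJ_add cPhi _; exact: cJ_cst.
split.
  move=> t t0.
  have d1 := dX1 t t0.
  have d2 : is_derive t 1 (fun x => Phi x - L) (Fm t).
    have := is_deriveB (dPhi t (ltW t0)) (is_derive_cst L t 1).
    by rewrite subr0.
  have d3 := is_derive_invmx (uX2 t (ltW t0)) (dX2 t t0).
  apply: is_derive_eq; first exact: is_derive_mulmx (is_derive_mulmx d1 d2) d3.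
  have u1 := uX1 t (ltW t0); have u2 := uX2 t (ltW t0).
  rewrite /= /Fm mulmxDl mulmxN !mulmxA (mulmxV u1) mul1mx !(mulmxK u2).
  by [].
set C1 := k%:R * (m%:R * K * M12) * K.
have C10 : 0 <= C1 by rewrite /C1 !mulr_ge0 // ?ler0n.
exists (C1 / a) => t t0.
pose psi T := X1 t *m Phi T *m invmx (X2 t).
have dpsi : forall T : R, t <= T -> T <= T ->
    is_derive T 1 psi (X1 t *m Fm T *m invmx (X2 t)).
  move=> T tT _.
  have := is_derive_mulmx (is_derive_mulmx (is_derive_cst (X1 t) T 1)
    (dPhi T (le_trans t0 tT))) (is_derive_cst (invmx (X2 t)) T 1).
  by rewrite mul0mx add0r mulmx0 addr0.
have bpsi : forall T : R, t <= T -> `|psi T - psi t| <= C1 / a.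
  move=> T tT.
  apply: (@mvt_exp_mx R m k psi (fun T => X1 t *m Fm T *m invmx (X2 t)) t T C1 a tT a0 C10).
    by move=> x hx hx2; exact: (dpsi x hx (lexx x)).
  move=> x tx _.
  have -> : X1 t *m Fm x *m invmx (X2 t) =
      X1 t *m invmx (X1 x) *m B12 x *m (X2 x *m invmx (X2 t)).
    by rewrite /Fm !mulmxA.
  have h1 := hE1 t x t0 tx; have h2 := hE2 x t t0 tx.
  apply: le_trans (norm_mulmx_le (norm_mulmx_le h1 (hM12 x (le_trans t0 tx))) h2) _.
  have e0 := expR_ge0 (- a * (x - t)); have e1 : expR (- a * (x - t)) <= 1.
    by rewrite expR_le1; nra.
  move: e0 e1; set e := expR _ => e0 e1.
  have -> : k%:R * (m%:R * (K * e) * M12) * (K * e) = C1 * e * e by rewrite /C1; ring.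
  by rewrite -[leRHS]mulr1; apply: ler_wpM2l => //; exact: mulr_ge0.

have lim1 : (fun T => psi T - psi t) @ +oo --> X1 t *m L *m invmx (X2 t) - psi t.
  apply: cvgB; last exact: cvg_cst.
  apply: cvg_mulmx; last exact: cvg_cst.
  apply: cvg_mulmx; first exact: cvg_cst.
  exact: PhiL.
have lim2 : `|psi T - psi t| @[T --> +oo] --> `|X1 t *m L *m invmx (X2 t) - psi t|.
  exact: cvg_norm lim1.
have cl : closed [set x : R | x <= C1 / a] by exact: closed_le.
have ev : \forall T \near +oo, `|psi T - psi t| <= C1 / a.
  by apply: filterS (nbhs_pinfty_ge (num_real t)) => T tT; exact: bpsi.
have fin := closed_cvg _ cl ev _ lim2.
move: fin => /=.
have -> : `|X1 t *m L *m invmx (X2 t) - psi t| =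
    `|X1 t *m (Phi t - L) *m invmx (X2 t)|.
  by rewrite -normrN opprB /psi mulmxBr mulmxBl.
exact.
Qed.




Unset Implicit Arguments.
Set Strict Implicit.
(* n = m + k with m = n - k >= 1 and k >= 1 *)
Theorem proposition3 (R : realType) (m k : nat)
  (B11 : R -> 'M[R]_m) (B12 : R -> 'M[R]_(m, k)) (B22 : R -> 'M[R]_k) :
  (0 < m)%N -> (0 < k)%N ->
  {within Jhalf R, continuous B11} ->
  {within Jhalf R, continuous B12} ->
  {within Jhalf R, continuous B22} ->
  unif_bounded_on_J B11 -> unif_bounded_on_J B12 -> unif_bounded_on_J B22 ->
  exp_dichotomy B11 0 ->
  exp_dichotomy B22 1%:M ->
  let B : R -> 'M[R]_(m + k) := fun t => block_mx (B11 t) (B12 t) 0 (B22 t) in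
  exp_dichotomy B (block_mx 0 0 0 1%:M) /\
  exists (S dS : R -> 'M[R]_(m + k)) (D1 : R -> 'M[R]_m) (D2 : R -> 'M[R]_k),
    lyapunov_transf S dS /\
    (forall t : R, 0 <= t ->
       transformed_coef B S dS t = block_mx (D1 t) 0 0 (D2 t)) /\
    (forall t : R, 0 <= t -> D1 t = B11 t).
Proof.
move=> hm hk cB11 cB12 cB22 [M11 hM11] [M12 hM12] [M22 hM22].
move=> [_ [K1 [a1 [X1 [K1ge [a10 [[cX1 [dX1 uX1]] [_ hX1]]]]]]]].
move=> [_ [K2 [a2 [X2 [K2ge [a20 [[cX2 [dX2 uX2]] [hX2 _]]]]]]]] B.
set al := Num.min a1 a2; set K := Num.max K1 K2.
have al0 : 0 < al by rewrite lt_min a10 a20.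
have ala1 : al <= a1 by rewrite ge_min lexx.
have ala2 : al <= a2 by rewrite ge_min lexx orbT.
have K1K : K1 <= K by rewrite le_max lexx.
have K2K : K2 <= K by rewrite le_max lexx orbT.
have K0 : 0 <= K by apply: le_trans K1K; apply: le_trans K1ge.
have hE1 : forall t s, 0 <= t -> t <= s ->
    `|X1 t *m invmx (X1 s)| <= K * expR (- al * (s - t)).
  move=> t s t0 ts; have := hX1 t s t0 ts; rewrite subr0 mulmx1 => h.
  apply: le_trans h _; apply: ler_pM.
  - exact: le_trans ler01 K1ge.
  - exact: expR_ge0.
  - exact: K1K.
  - rewrite ler_expR; nra.
have hE2 : forall t s, 0 <= s -> s <= t ->
    `|X2 t *m invmx (X2 s)| <= K * expR (- al * (t - s)).
  move=> t s s0 st; have := hX2 t s s0 st; rewrite mulmx1 => h.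
  apply: le_trans h _; apply: ler_pM.
  - exact: le_trans ler01 K2ge.
  - exact: expR_ge0.
  - exact: K2K.
  - rewrite ler_expR; nra.
have [H [cH [dH [MH hMH]]]] := exists_H al0 K0 cB12 hM12 cX1 dX1 uX1 cX2 dX2 uX2 hE1 hE2.
pose S := fun t => block_mx (1%:M : 'M[R]_m) (H t) 0 (1%:M : 'M[R]_k).
pose iS := fun t => block_mx (1%:M : 'M[R]_m) (- H t) 0 (1%:M : 'M[R]_k).
pose H' := fun t => B11 t *m H t + B12 t - H t *m B22 t.
pose dS := fun t => block_mx (0 : 'M[R]_m) (H' t) 0 (0 : 'M[R]_k).
have SiS : forall t, S t *m iS t = 1%:M.
  move=> t; rewrite mulmx_block !mulmx0 !mul0mx !mulmx1 !mul1mx !addr0 !add0r.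
  by rewrite addNr -scalar_mx_block.
have invS : forall t, invmx (S t) = iS t by move=> t; exact: inv_unique (SiS t).
have uS : forall t, S t \in unitmx by move=> t; exact: (mulmx1_unit (SiS t)).1.
have MH0 : 0 <= MH by apply: le_trans (hMH 0 (lexx 0)).
set MS := 2 + MH.
have hS : forall t, 0 <= t -> `|S t| <= MS.
  move=> t t0; apply: le_trans (norm_block _ _ _ _) _.
  have := @norm_scalar1 R m; have := @norm_scalar1 R k; have := hMH t t0.
  rewrite normr0 /MS; lra.
have hiS : forall t, 0 <= t -> `|iS t| <= MS.
  move=> t t0; apply: le_trans (norm_block _ _ _ _) _.
  have := @norm_scalar1 R m; have := @norm_scalar1 R k; have := hMH t t0.
  rewrite normr0 normrN /MS; lra.
have M110 : 0 <= M11 by apply: le_trans (hM11 0 (lexx 0)).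
have M120 : 0 <= M12 by apply: le_trans (hM12 0 (lexx 0)).
have M220 : 0 <= M22 by apply: le_trans (hM22 0 (lexx 0)).
have cH' : {within Jhalf R, continuous H'}.
  apply: cJ_add; first by apply: cJ_add; [exact: cJ_mul cB11 cH|exact: cB12].
  by apply: cJ_opp; exact: cJ_mul cH cB22.
set Md := m%:R * M11 * MH + M12 + k%:R * MH * M22.
have Md0 : 0 <= Md by rewrite /Md !addr_ge0 // !mulr_ge0.
have hH' : forall t, 0 <= t -> `|H' t| <= Md.
  move=> t t0; rewrite /H' /Md.
  apply: le_trans (ler_normB _ _) _; apply: lerD; last exact: norm_mulmx_le (hMH t t0) (hM22 t t0).
  apply: le_trans (ler_normD _ _) _; apply: lerD; last exact: hM12.
  exact: norm_mulmx_le (hM11 t t0) (hMH t t0).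
have dSd : forall t : R, 0 < t -> is_derive t 1 S (dS t).
  move=> t t0; apply: is_derive_block; try exact: is_derive_cst.
  exact: dH.
split; last first.
  exists S, dS, B11, B22; split; last split => //.
  - split; first by apply: cJ_block; [exact: cJ_cst|exact: cH|exact: cJ_cst|exact: cJ_cst].
    split; first by apply: cJ_block; [exact: cJ_cst|exact: cH'|exact: cJ_cst|exact: cJ_cst].
    split; first exact: dSd.
    split; first by move=> t _; exact: uS.
    exists (MS + Md) => t t0; split; last split.
    + by apply: le_trans (hS t t0) _; rewrite lerDl.
    + by rewrite invS; apply: le_trans (hiS t t0) _; rewrite lerDl.
    + apply: le_trans (norm_block _ _ _ _) _; rewrite !normr0 add0r !addr0.
      apply: le_trans (hH' t t0) _; rewrite lerDr /MS; lra.
  - move=> t t0; rewrite /transformed_coef invS /iS /S /dS /B /H'.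
    rewrite !mulmx_block !mulmx0 !mul0mx !mulmx1 !mul1mx !addr0 !add0r.
    rewrite opp_block_mx add_block_mx !oppr0 !addr0.
    rewrite mul0mx add0r; congr block_mx.
    by rewrite mulNmx [X in X - _]addrA subrr.
split.
  by rewrite mulmx_block !mulmx0 !mul0mx !addr0 add0r mulmx1.
pose Z := fun t => block_mx (X1 t) 0 0 (X2 t).
have uZ : forall t : R, 0 <= t -> Z t \in unitmx.
  by move=> t t0; apply: unitmx_diag; [exact: uX1|exact: uX2].
set N := (m + k)%N.
set KB := N%:R * (N%:R * MS * K) * MS.
have MS0 : 0 <= MS by rewrite /MS; lra.
have KB0 : 0 <= KB by rewrite /KB !mulr_ge0.
exists (1 + KB), al, (fun t => S t *m Z t).
split; first by rewrite lerDl.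
split; first exact: al0.
split.
  split.
    apply: cJ_mul; first by apply: cJ_block; [exact: cJ_cst|exact: cH|exact: cJ_cst|exact: cJ_cst].
    by apply: cJ_block; [exact: cX1|exact: cJ_cst|exact: cJ_cst|exact: cX2].
  split.
    move=> t t0.
    have dZ : is_derive t 1 Z (block_mx (B11 t *m X1 t) 0 0 (B22 t *m X2 t)).
      apply: is_derive_block; try exact: is_derive_cst.
      - exact: dX1.
      - exact: dX2.
    apply: is_derive_eq; first exact: is_derive_mulmx (dSd t t0) dZ.
    rewrite /dS /S /Z /B /H'.
    rewrite !mulmx_block !mulmx0 !mul0mx !mul1mx !addr0 !add0r.
    rewrite !mulmx0 add_block_mx !add0r !addr0; congr block_mx.
    by rewrite !mulmxDl mulNmx !mulmxA subrK.
  move=> t t0; rewrite unitmx_mul uS; exact: uZ.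
split.
  move=> t t0 h0 h.
  have tt : 0 <= t by apply: le_trans h.
  rewrite invmx_mul ?uS ?uZ // /Z invmx_diag ?uX1 ?uX2 // invS.
  set iZ := block_mx (invmx (X1 t0)) 0 0 (invmx (X2 t0)).
  have -> : S t *m block_mx (X1 t) 0 0 (X2 t) *m block_mx 0 0 0 1%:M *m (iZ *m iS t0)
      = S t *m (block_mx (X1 t) 0 0 (X2 t) *m block_mx 0 0 0 1%:M *m iZ) *m iS t0.
    by rewrite !mulmxA.
  have -> : block_mx (X1 t) 0 0 (X2 t) *m block_mx 0 0 0 1%:M *m iZ =
      block_mx 0 0 0 (X2 t *m invmx (X2 t0)).
    rewrite /iZ !mulmx_block !mulmx0 !mul0mx !addr0 !add0r mulmx1.
    by rewrite !mul0mx.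
  have Eb : `|block_mx (0 : 'M[R]_(m, m)) (0 : 'M[R]_(m, k)) (0 : 'M[R]_(k, m))
       (X2 t *m invmx (X2 t0))| <= K * expR (- al * (t - t0)).
    apply: le_trans (norm_block _ _ _ _) _; rewrite !normr0 !add0r.
    exact: hE2.
  apply: le_trans (norm_mulmx_le (norm_mulmx_le (hS t tt) Eb) (hiS t0 h0)) _.
  have e0 := expR_ge0 (- al * (t - t0)).
  move: e0; set e := expR _ => e0.
  have -> : N%:R * (N%:R * MS * (K * e)) * MS = KB * e by rewrite /KB; ring.
  nra.
move=> t t0 h0 h.
have tt : 0 <= t0 by apply: le_trans h.
rewrite invmx_mul ?uS ?uZ // /Z invmx_diag ?uX1 ?uX2 // invS.
set iZ := block_mx (invmx (X1 t0)) 0 0 (invmx (X2 t0)).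
rewrite [1%:M](scalar_mx_block m k) opp_block_mx add_block_mx !oppr0 !addr0 subrr.
have -> : S t *m block_mx (X1 t) 0 0 (X2 t) *m block_mx 1%:M 0 0 0 *m (iZ *m iS t0)
    = S t *m (block_mx (X1 t) 0 0 (X2 t) *m block_mx 1%:M 0 0 0 *m iZ) *m iS t0.
  by rewrite !mulmxA.
have -> : block_mx (X1 t) 0 0 (X2 t) *m block_mx 1%:M 0 0 0 *m iZ =
    block_mx (X1 t *m invmx (X1 t0)) 0 0 0.
  rewrite /iZ !mulmx_block !mulmx0 !mul0mx !addr0 !add0r mulmx1.
  by rewrite ?mul0mx ?mulmx0.
have Eb : `|block_mx (X1 t *m invmx (X1 t0)) (0 : 'M[R]_(m, k)) (0 : 'M[R]_(k, m))
     (0 : 'M[R]_(k, k))| <= K * expR (al * (t - t0)).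
  apply: le_trans (norm_block _ _ _ _) _; rewrite !normr0 !addr0.
  have -> : al * (t - t0) = - al * (t0 - t) by ring.
  exact: hE1.
apply: le_trans (norm_mulmx_le (norm_mulmx_le (hS t h0) Eb) (hiS t0 tt)) _.
have e0 := expR_ge0 (al * (t - t0)).
move: e0; set e := expR _ => e0.
have -> : N%:R * (N%:R * MS * (K * e)) * MS = KB * e by rewrite /KB; ring.
nra.
Qed.
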